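(* Let $\mathbf{G}\in\mathbb{C}^{N_s\times N_t}$, $\mathbf{U}_k\in\mathbb{C}^{N_r\times N_s}$, $\mathbf{D}_k\in\mathbb{C}^{N_r\times N_t}$ for $k=1,\dots,K$, let $\mathbf{W}_k\in\mathbb{C}^{N_t\times N_d}$ be fixed, $\sigma_0^2>0$, and weights $\omega_k$. For $\boldsymbol{\theta}\in\mathbb{C}^{N_s}$ let $\mathbf{H}_k(\boldsymbol{\theta})=\mathbf{D}_k+\mathbf{U}_k\mathrm{diag}(\boldsymbol{\theta})\mathbf{G}$, $\bar{\mathbf{W}}=\sum_{j=1}^K\mathbf{W}_j\mathbf{W}_j^{\mathsf H}$, $\bar{\mathbf{W}}_k=\sum_{j\neq k}\mathbf{W}_j\mathbf{W}_j^{\mathsf H}$, and $$R(\boldsymbol{\theta})=\sum_{k=1}^K\omega_k\Big[\log\det(\sigma_0^2\mathbf{I}+\mathbf{H}_k\bar{\mathbf{W}}\mathbf{H}_k^{\mathsf H})-\log\det(\sigma_0^2\mathbf{I}+\mathbf{H}_k\bar{\mathbf{W}}_k\mathbf{H}_k^{\mathsf H})\Big],$$ with $\mathbf{H}_k=\mathbf{H}_k(\boldsymbol{\theta})$. Then $$\nabla_{\boldsymbol{\theta}}R(\boldsymbol{\theta})=\sum_{k=1}^K\omega_k\Big(\mathrm{vecd}\big(\mathbf{U}_k^{\mathsf H}(\mathbf{H}_k\bar{\mathbf{W}}\mathbf{H}_k^{\mathsf H}+\sigma_0^2\mathbf{I})^{-1}\mathbf{H}_k\bar{\mathbf{W}}\mathbf{G}^{\mathsf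 H}\big)-\mathrm{vecd}\big(\mathbf{U}_k^{\mathsf H}(\mathbf{H}_k\bar{\mathbf{W}}_k\mathbf{H}_k^{\mathsf H}+\sigma_0^2\mathbf{I})^{-1}\mathbf{H}_k\bar{\mathbf{W}}_k\mathbf{G}^{\mathsf H}\big)\Big).$$
   Context: $\mathrm{diag}(\boldsymbol{\theta})$ is the diagonal matrix with diagonal $\boldsymbol{\theta}$; $\mathrm{vecd}(\mathbf{X})$ is the vector of diagonal entries of a square matrix $\mathbf{X}$; $\log$ is the natural logarithm. The complex-valued gradient of a real function $f$ is $\nabla_{\boldsymbol{\theta}}f=\frac12\big(\frac{\partial f}{\partial\Re\{\boldsymbol{\theta}\}}+j\frac{\partial f}{\partial\Im\{\boldsymbol{\theta}\}}\big)$. $R$ is the weighted sum rate of an RIS-aided downlink multiuser MIMO system with RIS phase-shift vector $\boldsymbol{\theta}$ and fixed precoders. *)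

(* Defs.v *)
From HB Require Import structures.
From mathcomp Require Import all_boot all_order all_algebra.
From mathcomp Require Import complex.
From mathcomp Require Import all_classical all_reals all_analysis.
Set Implicit Arguments. Unset Strict Implicit. Unset Printing Implicit Defensive.
Import Order.TTheory GRing.Theory Num.Theory.
Local Open Scope ring_scope.

Definition ctrmx {R : rcfType} m n (A : 'M[R[i]]_(m, n)) : 'M[R[i]]_(n, m) :=
  (map_mx (@conjc R) A)^T.

Definition diagv {R : rcfType} n (th : 'cV[R[i]]_n) : 'M[R[i]]_n := diag_mx th^T.

Definition vecd {R : rcfType} n (X : 'M[R[i]]_n) : 'cV[R[i]]_n := \col_i X i i.

Definition Hk {R : rcfType} Nr Ns Nt (D : 'M[R[i]]_(Nr, Nt)) (U : 'M[R[i]]_(Nr, Ns))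
  (G : 'M[R[i]]_(Ns, Nt)) (th : 'cV[R[i]]_Ns) : 'M[R[i]]_(Nr, Nt) :=
  D + U *m diagv th *m G.

Definition Wbar {R : rcfType} K Nt Nd (W : 'I_K -> 'M[R[i]]_(Nt, Nd)) : 'M[R[i]]_Nt :=
  \sum_(j < K) W j *m ctrmx (W j).

Definition Wbark {R : rcfType} K Nt Nd (W : 'I_K -> 'M[R[i]]_(Nt, Nd)) (k : 'I_K) : 'M[R[i]]_Nt :=
  \sum_(j < K | j != k) W j *m ctrmx (W j).

(* log det of a Hermitian positive-definite matrix (whose determinant is a
   positive real): natural log of the (real) determinant. *)
Definition logdet {R : realType} n (A : 'M[R[i]]_n) : R := ln (complex.Re (\det A)).

Definition WSR {R : realType} K Nr Ns Nt Nd (G : 'M[R[i]]_(Ns, Nt))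
  (U : 'I_K -> 'M[R[i]]_(Nr, Ns)) (D : 'I_K -> 'M[R[i]]_(Nr, Nt))
  (W : 'I_K -> 'M[R[i]]_(Nt, Nd)) (sigma2 : R) (omega : 'I_K -> R)
  (th : 'cV[R[i]]_Ns) : R :=
  \sum_(k < K)
    omega k * (logdet ((sigma2%:C)%C%:M + Hk (D k) (U k) G th *m Wbar W *m ctrmx (Hk (D k) (U k) G th))
             - logdet ((sigma2%:C)%C%:M + Hk (D k) (U k) G th *m Wbark W k *m ctrmx (Hk (D k) (U k) G th))).

Definition ecv {R : rcfType} n (i : 'I_n) : 'cV[R[i]]_n := \col_j (if j == i then 1 else 0).

Definition dRe {R : realType} n (f : 'cV[R[i]]_n -> R) (th : 'cV[R[i]]_n) (i : 'I_n) : R ->  R :=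
  fun t => f (th + (t%:C)%C *: ecv i).
Definition dIm {R : realType} n (f : 'cV[R[i]]_n -> R) (th : 'cV[R[i]]_n) (i : 'I_n) : R ->  R :=
  fun t => f (th + ((t%:C)%C * 'i%C) *: ecv i).

(* Main.v *)
Require Import Defs.
From HB Require Import structures.
From mathcomp Require Import all_boot all_order all_algebra.
From mathcomp Require Import complex.
From mathcomp Require Import all_classical all_reals all_analysis.
Import Order.TTheory GRing.Theory Num.Theory.
Local Open Scope ring_scope.

Set Implicit Arguments. Unset Strict Implicit.
Lemma prod1X_coef (F : comNzRingType) (I : finType) (q : I -> {poly F}) :
  let P := \prod_i (1 + 'X * q i) in P`_0 = 1 /\ P`_1 = \sum_i (q i)`_0.
Proof.
rewrite /=.
apply: (big_ind2 (fun (a : {poly F}) (b : F) => a`_0 = 1 /\ a`_1 = b)).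
- by split; rewrite coef1.
- move=> a b c d [a0 a1] [c0 c1]; split.
    by rewrite coefM big_ord1 a0 c0 mulr1.
  rewrite coefM big_ord_recr /= big_ord1 /= a0 c0 a1 c1 mul1r mulr1 addrC.
  by [].
- move=> j _; rewrite coefD coef1 coefXM /= coefD coef1 coefXM /= addr0 add0r.
  by split.
Qed.

From mathcomp Require Import ring lra.
From mathcomp Require Import fingroup perm.
Local Open Scope ring_scope.
Lemma det1X_coef1 (F : comNzRingType) n (N : 'M[{poly F}]_n) :
  (\det (1%:M + 'X *: N))`_1 = \sum_i (N i i)`_0.
Proof.
set M := 1%:M + 'X *: N.
have offd : forall i j, i != j -> M i j = 'X * N i j.
  by move=> i j /negbTE h; rewrite !mxE h mulr0n add0r.
have ond : forall i, M i i = 1 + 'X * N i i.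
  by move=> i; rewrite !mxE eqxx mulr1n.
rewrite /determinant (bigD1 (1%g : {perm 'I_n})) //= coefD coef_sum.
rewrite [X in _ + X]big1 ?addr0.
  rewrite odd_perm1 expr0 mul1r.
  under eq_bigr => i _ do rewrite perm1 ond.
  by case: (@prod1X_coef _ _ (fun i => N i i)).
move=> s ns1.
case: (pickP (fun i => s i != i)) => [i0 Hi0 | H]; last first.
  case/negP: ns1; apply/eqP/permP => x; rewrite perm1.
  by have := H x => /= /negbFE/eqP.
set j0 := s i0.
have Hj0 : s j0 != j0.
  apply/eqP => h; move/eqP: Hi0; apply; exact: (perm_inj h).
rewrite (bigD1 i0) // (bigD1 j0) /=; last by [].
rewrite offd 1?eq_sym // offd 1?eq_sym //.
move: (N i0 (s i0)) (N j0 (s j0)) (\prod_(i < n | _) _) ((-1) ^+ s) => a b c d.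
have -> : d * ('X * a * ('X * b * c)) = 'X^2 * (d * (a * b * c)) by rewrite expr2; ring.
by rewrite coefXnM.
Qed.

Lemma detpoly_coef1 (F : fieldType) n (A0 B C : 'M[F]_n) : A0 \in unitmx ->
  (\det (map_mx polyC A0 + 'X *: map_mx polyC B + 'X^2 *: map_mx polyC C))`_1
  = \det A0 * \tr (invmx A0 *m B).
Proof.
move=> uA.
set N := map_mx polyC (invmx A0 *m B) + 'X *: map_mx polyC (invmx A0 *m C).
have -> : map_mx polyC A0 + 'X *: map_mx polyC B + 'X^2 *: map_mx polyC C
   = map_mx polyC A0 *m (1%:M + 'X *: N).
  rewrite mulmxDr mulmx1 /N scalerDr mulmxDr -!scalemxAr.
  by rewrite -!map_mxM !mulmxA mulmxV // !mul1mx scalerA -expr2 addrA.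
rewrite det_mulmx det_map_mx coefCM det1X_coef1 /mxtrace.
congr (_ * _); apply: eq_bigr => i _.
by rewrite /N !mxE coefD coefC coefXM /= addr0.
Qed.

Lemma detpoly_horner (F : comNzRingType) n (A0 B C : 'M[F]_n) (x : F) :
  (\det (map_mx polyC A0 + 'X *: map_mx polyC B + 'X^2 *: map_mx polyC C)).[x]
  = \det (A0 + x *: B + x ^+ 2 *: C).
Proof.
rewrite -[LHS]/(horner_eval x _) -det_map_mx; congr (\det _).
apply/matrixP => i j; rewrite !mxE.
rewrite -[LHS]/(((A0 i j)%:P + 'X * (B i j)%:P + 'X^2 * (C i j)%:P).[x]).
by rewrite !hornerE.
Qed.

Local Open Scope complex_scope.
Local Notation cRe := complex.Re.
Local Notation cIm := complex.Im.
Lemma ReD (R : rcfType) (a b : R[i]) : cRe (a + b) = cRe a + cRe b.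
Proof. by case: a => ? ?; case: b. Qed.
Lemma Re0 (R : rcfType) : cRe (0 : R[i]) = 0. Proof. by []. Qed.
Lemma ReMr (R : rcfType) (a : R[i]) (r : R) : cRe (a * r%:C) = cRe a * r.
Proof. by case: a => x y /=; rewrite mulr0 subr0. Qed.
Lemma ImMr (R : rcfType) (a : R[i]) (r : R) : cIm (a * r%:C) = cIm a * r.
Proof. by case: a => x y /=; rewrite mulr0 add0r. Qed.
Lemma Re_sum (R : rcfType) (I : Type) (r : seq I) (P : pred I) (F : I -> R[i]) :
  cRe (\sum_(i <- r | P i) F i) = \sum_(i <- r | P i) cRe (F i).
Proof. exact: (big_morph _ (@ReD R) (@Re0 R)). Qed.

Definition RePoly (R : rcfType) (p : {poly R[i]}) : {poly R} := \poly_(j < size p) cRe p`_j.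

Lemma RePoly_coef (R : rcfType) (p : {poly R[i]}) j : (RePoly p)`_j = cRe p`_j.
Proof.
rewrite coef_poly; case: ltnP => // h.
by rewrite nth_default.
Qed.

Lemma RePoly_horner (R : rcfType) (p : {poly R[i]}) (t : R) :
  (RePoly p).[t] = cRe (p.[t%:C]).
Proof.
rewrite (@horner_coef_wide _ (size p)); last exact: size_poly.
rewrite horner_coef Re_sum; apply: eq_bigr => j _.
by rewrite RePoly_coef -rmorphXn ReMr.
Qed.

Section Ctr.
Variable R : rcfType.
Implicit Types a : R[i].

Lemma ctrmxM m n p (A : 'M[R[i]]_(m, n)) (B : 'M[R[i]]_(n, p)) :
  ctrmx (A *m B) = ctrmx B *m ctrmx A.
Proof. by rewrite /ctrmx map_mxM trmx_mul. Qed.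

Lemma ctrmxD m n (A B : 'M[R[i]]_(m, n)) : ctrmx (A + B) = ctrmx A + ctrmx B.
Proof. by rewrite /ctrmx map_mxD linearD. Qed.

Lemma ctrmxN m n (A : 'M[R[i]]_(m, n)) : ctrmx (- A) = - ctrmx A.
Proof. by rewrite /ctrmx map_mxN linearN. Qed.

Lemma ctrmxZ m n a (A : 'M[R[i]]_(m, n)) : ctrmx (a *: A) = conjc a *: ctrmx A.
Proof. by rewrite /ctrmx map_mxZ linearZ. Qed.

Lemma ctrmxK m n (A : 'M[R[i]]_(m, n)) : ctrmx (ctrmx A) = A.
Proof.
rewrite /ctrmx map_trmx trmxK -map_mx_comp map_mx_id // => x /=.
exact: conjcK.
Qed.

Lemma ctrmx_sum m n (I : Type) (r : seq I) (P : pred I) (F : I -> 'M[R[i]]_(m, n)) :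
  ctrmx (\sum_(j <- r | P j) F j) = \sum_(j <- r | P j) ctrmx (F j).
Proof.
have h0 : ctrmx (0 : 'M[R[i]]_(m, n)) = 0 by rewrite /ctrmx map_mx0 trmx0.
exact: (big_morph _ (@ctrmxD m n) h0).
Qed.

Lemma ctrmx_scalar n a : ctrmx (a%:M : 'M[R[i]]_n) = (conjc a)%:M.
Proof. by rewrite /ctrmx map_scalar_mx tr_scalar_mx. Qed.

Lemma ctrmx_inv n (A : 'M[R[i]]_n) : ctrmx (invmx A) = invmx (ctrmx A).
Proof. by rewrite /ctrmx map_invmx trmx_inv. Qed.

Lemma conj_det n (A : 'M[R[i]]_n) : conjc (\det A) = \det (ctrmx A).
Proof. by rewrite /ctrmx det_tr det_map_mx. Qed.

Lemma conj_tr n (A : 'M[R[i]]_n) : conjc (\tr A) = \tr (ctrmx A).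
Proof. by rewrite /ctrmx mxtrace_tr /mxtrace rmorph_sum; apply: eq_bigr => j _; rewrite mxE. Qed.

Lemma conj_fix_Im a : conjc a = a -> complex.Im a = 0.
Proof.
by case: a => x y /= [] h; lra.
Qed.

Lemma conj_fix_real a : conjc a = a -> a = (complex.Re a)%:C.
Proof. by move=> h; move: (conj_fix_Im h); case: a {h} => x y /= ->. Qed.

End Ctr.

Section Pos.
Variable R : rcfType.

Lemma entryDZ m n (c d : R[i]) (A B : 'M[R[i]]_(m, n)) i j :
  (c *: A + d *: B) i j = c * A i j + d * B i j.
Proof. by rewrite !mxE. Qed.

Lemma conjR (x : R) : conjc (x%:C) = x%:C.
Proof. by apply/eqP; rewrite eq_complex /= oppr0 !eqxx. Qed.

Lemma vvH_pos n (v : 'rV[R[i]]_n) : v != 0 -> 0 < (v *m ctrmx v) 0 0.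
Proof.
move=> vn0.
have -> : (v *m ctrmx v) 0 0 = \sum_j v 0 j * conjc (v 0 j).
  by rewrite !mxE; apply: eq_bigr => j _; rewrite !mxE.
rewrite lt_def sumr_ge0 ?andbT; last by move=> j _; exact: mulcJ_ge0.
apply/eqP => h; case/eqP: vn0; apply/matrixP => i j; rewrite (ord1 i) mxE.
have := psumr_eq0P (fun j _ => mulcJ_ge0 (v 0 j)) h (i := j) isT.
by move/eqP; rewrite mulf_eq0 conjc_eq0 orbb => /eqP.
Qed.

Lemma psd_det_pos n (sig : R) (X : 'M[R[i]]_n) : 0 < sig -> ctrmx X = X ->
  (forall v : 'rV_n, 0 <= (v *m X *m ctrmx v) 0 0) ->
  \det ((sig%:C)%:M + X) = (complex.Re (\det ((sig%:C)%:M + X)))%:C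
  /\ 0 < complex.Re (\det ((sig%:C)%:M + X)).
Proof.
move=> sp hX psd.
pose M := fun s : R => (sig%:C)%:M + s%:C *: X.
have herm : forall s, ctrmx (M s) = M s.
  by move=> s; rewrite /M ctrmxD ctrmx_scalar ctrmxZ hX !conjR.
have detR : forall s, \det (M s) = (complex.Re (\det (M s)))%:C.
  by move=> s; apply: conj_fix_real; rewrite conj_det herm.
have nz : forall s, 0 <= s -> \det (M s) != 0.
  move=> s s0; apply/negP => /det0P [v vn0 vM0].
  have : (v *m M s *m ctrmx v) 0 0 = 0 by rewrite vM0 mul0mx mxE.
  have -> : v *m M s *m ctrmx v = sig%:C *: (v *m ctrmx v) + s%:C *: (v *m X *m ctrmx v).
    by rewrite /M mulmxDr mul_mx_scalar -scalemxAr mulmxDl -!scalemxAl.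
  rewrite entryDZ => h.
  have : 0 < sig%:C * (v *m ctrmx v) 0 0 + s%:C * (v *m X *m ctrmx v) 0 0.
    apply: ltr_pwDl; first by apply: mulr_gt0; [rewrite ltcR | exact: vvH_pos].
    by apply: mulr_ge0; [rewrite lecR | exact: psd].
  by rewrite h ltxx.
pose P := \det (map_mx polyC ((sig%:C)%:M) + 'X *: map_mx polyC X + 'X^2 *: map_mx polyC (0 : 'M[R[i]]_n)).
have Pe : forall s, (RePoly P).[s] = complex.Re (\det (M s)).
  by move=> s; rewrite RePoly_horner detpoly_horner scaler0 addr0.
have P0 : 0 < (RePoly P).[0].
  rewrite Pe /M rmorph0 scale0r addr0 det_scalar -rmorphXn /=.
  exact: exprn_gt0.
have P1 : 0 < (RePoly P).[1].
  rewrite ltNge; apply/negP => h.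
  have [x /andP[x0 x1] rt] : exists2 x, 0 <= x <= 1 & root (- RePoly P) x.
    apply: poly_ivt; first exact: ler01.
    by rewrite !hornerN oppr_le0 oppr_ge0 h (ltW P0).
  move: rt; rewrite /root hornerN oppr_eq0 Pe => /eqP h0.
  by move: (nz x x0); rewrite detR h0 eqxx.
have M1 : M 1 = (sig%:C)%:M + X by rewrite /M rmorph1 scale1r.
by rewrite -M1 -Pe; split; [rewrite Pe; exact: detR | exact: P1].
Qed.

End Pos.

Section Expand.
Variable R : rcfType.

Lemma expandA m n (S : 'M[R[i]]_m) (H0 E : 'M[R[i]]_(m, n)) (Wb : 'M[R[i]]_n) (t : R) :
  S + (H0 + t%:C *: E) *m Wb *m ctrmx (H0 + t%:C *: E) =
  (S + H0 *m Wb *m ctrmx H0) + t%:C *: (E *m Wb *m ctrmx H0 + H0 *m Wb *m ctrmx E)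
  + (t%:C) ^+ 2 *: (E *m Wb *m ctrmx E).
Proof.
rewrite ctrmxD ctrmxZ conjR !mulmxDl !mulmxDr -!scalemxAl -!scalemxAr.
rewrite scalerA -expr2 scalerDr.
move: (H0 *m Wb *m ctrmx H0) (E *m Wb *m ctrmx H0) (H0 *m Wb *m ctrmx E) (E *m Wb *m ctrmx E) => a b c d.
rewrite !addrA; congr (_ + _).
rewrite -!addrA; congr (_ + _); congr (_ + _).
by rewrite addrC.
Qed.

Lemma diagvDZ n (a b : 'cV[R[i]]_n) (c : R[i]) : diagv (a + c *: b) = diagv a + c *: diagv b.
Proof.
apply/matrixP => j k; rewrite !mxE.
by case: (j == k); rewrite ?mulr1n ?mulr0n ?mulr0 ?addr0.
Qed.

Lemma HkDZ Nr Ns Nt (D : 'M[R[i]]_(Nr, Nt)) (U : 'M[R[i]]_(Nr, Ns)) (G : 'M[R[i]]_(Ns, Nt))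
   (th v : 'cV[R[i]]_Ns) (c : R[i]) :
  Hk D U G (th + c *: v) = Hk D U G th + c *: (U *m diagv v *m G).
Proof.
by rewrite /Hk diagvDZ mulmxDr mulmxDl -scalemxAr -scalemxAl addrA.
Qed.

End Expand.

Section Deriv.
Variable R : realType.

Lemma is_derive_lnpoly (p : {poly R}) : 0 < p.[0] ->
  is_derive (0:R) (1:R) (fun t => ln p.[t]) (p`_1 / p.[0]).
Proof.
move=> p0.
have := @is_derive1_comp R (@ln R) (horner p) 0 (p.[0])^-1 (p^`().[0]) (is_derive1_ln p0) (is_derive_poly p 0).
by rewrite [p^`().[0]]horner_coef0 coef_deriv mulr1n mulrC.
Qed.

Lemma ReconjE (z : R[i]) : complex.Re (conjc z) = complex.Re z.
Proof. by case: z. Qed.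

Lemma is_derive_logdet Nr Nt (sig : R) (H0 E : 'M[R[i]]_(Nr, Nt)) (Wb : 'M[R[i]]_Nt) :
  0 < sig -> ctrmx Wb = Wb -> (forall v : 'rV_Nt, 0 <= (v *m Wb *m ctrmx v) 0 0) ->
  is_derive (0:R) (1:R)
    (fun t : R => logdet ((sig%:C)%:M + (H0 + t%:C *: E) *m Wb *m ctrmx (H0 + t%:C *: E)))
    (2 * complex.Re (\tr (invmx (H0 *m Wb *m ctrmx H0 + (sig%:C)%:M) *m H0 *m Wb *m ctrmx E))).
Proof.
move=> sp hW psdW.
set A0 := (sig%:C)%:M + H0 *m Wb *m ctrmx H0.
set B := E *m Wb *m ctrmx H0 + H0 *m Wb *m ctrmx E.
set C := E *m Wb *m ctrmx E.
pose P := \det (map_mx polyC A0 + 'X *: map_mx polyC B + 'X^2 *: map_mx polyC C).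
have hermX : ctrmx (H0 *m Wb *m ctrmx H0) = H0 *m Wb *m ctrmx H0.
  by rewrite !ctrmxM ctrmxK hW mulmxA.
have psdX : forall v : 'rV_Nr, 0 <= (v *m (H0 *m Wb *m ctrmx H0) *m ctrmx v) 0 0.
  move=> v; have := psdW (v *m H0).
  by rewrite ctrmxM !mulmxA.
have [detA0 rpos] := psd_det_pos sp hermX psdX.
rewrite -/A0 in detA0 rpos.
set r := complex.Re (\det A0) in detA0 rpos.
have hermA0 : ctrmx A0 = A0 by rewrite /A0 ctrmxD ctrmx_scalar conjR hermX.
have uA0 : A0 \in unitmx.
  rewrite unitmxE unitfE detA0; apply/eqP => /complexI /eqP.
  by rewrite gt_eqF.
have fe : (fun t : R => logdet ((sig%:C)%:M + (H0 + t%:C *: E) *m Wb *m ctrmx (H0 + t%:C *: E)))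
        = (fun t => ln (RePoly P).[t]).
  by apply/funext => t; rewrite /logdet RePoly_horner detpoly_horner expandA.
rewrite fe; apply: is_derive_eq; first apply: is_derive_lnpoly.
  by rewrite RePoly_horner detpoly_horner rmorph0 scale0r expr0n /= scale0r !addr0.
rewrite RePoly_coef RePoly_horner detpoly_horner rmorph0 scale0r expr0n /= scale0r !addr0.
rewrite detpoly_coef1 // -/r detA0 [r%:C * _]mulrC ReMr mulfK ?gt_eqF //.
rewrite [H0 *m Wb *m ctrmx H0 + _]addrC -/A0.
rewrite /B mulmxDr mxtraceD ReD.
set z := \tr (invmx A0 *m H0 *m Wb *m ctrmx E).
have -> : \tr (invmx A0 *m (H0 *m Wb *m ctrmx E)) = z by rewrite /z !mulmxA.
suff -> : \tr (invmx A0 *m (E *m Wb *m ctrmx H0)) = conjc z by rewrite ReconjE mulr2n mulrDl mul1r.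
rewrite /z conj_tr !ctrmxM ctrmxK hW ctrmx_inv hermA0.
by rewrite mxtrace_mulC !mulmxA.
Qed.

End Deriv.

Section Wsum.
Variable R : rcfType.

Lemma vvH_ge0 n (v : 'rV[R[i]]_n) : 0 <= (v *m ctrmx v) 0 0.
Proof.
rewrite !mxE; apply: sumr_ge0 => j _; rewrite !mxE; exact: mulcJ_ge0.
Qed.

Lemma Wsum_herm K Nt Nd (W : 'I_K -> 'M[R[i]]_(Nt, Nd)) (P : pred 'I_K) :
  ctrmx (\sum_(j < K | P j) W j *m ctrmx (W j)) = \sum_(j < K | P j) W j *m ctrmx (W j).
Proof. by rewrite ctrmx_sum; apply: eq_bigr => j _; rewrite ctrmxM ctrmxK. Qed.

Lemma Wsum_psd K Nt Nd (W : 'I_K -> 'M[R[i]]_(Nt, Nd)) (P : pred 'I_K) (v : 'rV_Nt) :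
  0 <= (v *m (\sum_(j < K | P j) W j *m ctrmx (W j)) *m ctrmx v) 0 0.
Proof.
rewrite mulmx_sumr mulmx_suml summxE; apply: sumr_ge0 => j _.
have := vvH_ge0 (v *m W j).
by rewrite ctrmxM !mulmxA.
Qed.

Lemma Wbar_herm K Nt Nd (W : 'I_K -> 'M[R[i]]_(Nt, Nd)) : ctrmx (Wbar W) = Wbar W.
Proof. exact: (@Wsum_herm K Nt Nd W xpredT). Qed.
Lemma Wbar_psd K Nt Nd (W : 'I_K -> 'M[R[i]]_(Nt, Nd)) (v : 'rV_Nt) :
  0 <= (v *m Wbar W *m ctrmx v) 0 0.
Proof. exact: (@Wsum_psd K Nt Nd W xpredT). Qed.
Lemma Wbark_herm K Nt Nd (W : 'I_K -> 'M[R[i]]_(Nt, Nd)) k : ctrmx (Wbark W k) = Wbark W k.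
Proof. exact: (@Wsum_herm K Nt Nd W (fun j => j != k)). Qed.
Lemma Wbark_psd K Nt Nd (W : 'I_K -> 'M[R[i]]_(Nt, Nd)) k (v : 'rV_Nt) :
  0 <= (v *m Wbark W k *m ctrmx v) 0 0.
Proof. exact: (@Wsum_psd K Nt Nd W (fun j => j != k)). Qed.

Lemma diagvZ n (b : 'cV[R[i]]_n) (c : R[i]) : diagv (c *: b) = c *: diagv b.
Proof. by have := diagvDZ 0 b c; rewrite add0r => ->; rewrite /diagv trmx0 (raddf0 (@diag_mx _ n)) add0r. Qed.

Lemma ctr_diag_e n (i : 'I_n) : ctrmx (diagv (ecv i)) = diagv (ecv i) :> 'M[R[i]]_n.
Proof.
apply/matrixP => a b; rewrite !mxE.
have [->|hab] := eqVneq a b.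
  by rewrite !mulr1n; case: (b == i); [exact: conjc1 | exact: conjc0].
by rewrite !mulr0n conjc0.
Qed.

Lemma tr_diag_e n (Y : 'M[R[i]]_n) (i : 'I_n) : \tr (Y *m diagv (ecv i)) = Y i i.
Proof.
rewrite /mxtrace (bigD1 i) //= big1 ?addr0.
  by rewrite /diagv mul_mx_diag !mxE eqxx mulr1.
by move=> j /negbTE h; rewrite /diagv mul_mx_diag !mxE h mulr0.
Qed.

Lemma z_form Nr Ns Nt (X : 'M[R[i]]_(Nr, Nt)) (U : 'M[R[i]]_(Nr, Ns)) (G : 'M[R[i]]_(Ns, Nt))
  (v : 'cV[R[i]]_Ns) :
  \tr (X *m ctrmx (U *m diagv v *m G)) = \tr (ctrmx U *m X *m ctrmx G *m ctrmx (diagv v)).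
Proof.
rewrite !ctrmxM !mulmxA mxtrace_mulC !mulmxA.
by [].
Qed.

End Wsum.

Section Z3.
Variable R : rcfType.
Lemma z_form3 Nr Ns Nt (A : 'M[R[i]]_Nr) (H : 'M[R[i]]_(Nr, Nt)) (Wb : 'M[R[i]]_Nt)
  (U : 'M[R[i]]_(Nr, Ns)) (G : 'M[R[i]]_(Ns, Nt)) (v : 'cV[R[i]]_Ns) :
  \tr (A *m H *m Wb *m ctrmx (U *m diagv v *m G)) =
  \tr (ctrmx U *m A *m H *m Wb *m ctrmx G *m ctrmx (diagv v)).
Proof. by rewrite z_form !mulmxA. Qed.
End Z3.

Section Ze.
Variable R : rcfType.
Lemma z_e Nr Ns Nt (A : 'M[R[i]]_Nr) (H : 'M[R[i]]_(Nr, Nt)) (Wb : 'M[R[i]]_Nt)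
  (U : 'M[R[i]]_(Nr, Ns)) (G : 'M[R[i]]_(Ns, Nt)) (i : 'I_Ns) :
  \tr (A *m H *m Wb *m ctrmx (U *m diagv (ecv i) *m G)) =
  (ctrmx U *m A *m H *m Wb *m ctrmx G) i i.
Proof. by rewrite z_form3 ctr_diag_e tr_diag_e. Qed.
Lemma z_ie Nr Ns Nt (A : 'M[R[i]]_Nr) (H : 'M[R[i]]_(Nr, Nt)) (Wb : 'M[R[i]]_Nt)
  (U : 'M[R[i]]_(Nr, Ns)) (G : 'M[R[i]]_(Ns, Nt)) (i : 'I_Ns) :
  \tr (A *m H *m Wb *m ctrmx (U *m diagv ('i%C *: ecv i) *m G)) =
  conjc 'i%C * (ctrmx U *m A *m H *m Wb *m ctrmx G) i i.
Proof. by rewrite z_form3 diagvZ ctrmxZ ctr_diag_e -scalemxAr mxtraceZ tr_diag_e. Qed.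
End Ze.

Section Final.
Variable R : realType.

Lemma WSR_dir K Nr Ns Nt Nd (G : 'M[R[i]]_(Ns, Nt)) (U : 'I_K -> 'M[R[i]]_(Nr, Ns))
  (D : 'I_K -> 'M[R[i]]_(Nr, Nt)) (W : 'I_K -> 'M[R[i]]_(Nt, Nd))
  (sigma2 : R) (omega : 'I_K -> R) (th v : 'cV[R[i]]_Ns) : 0 < sigma2 ->
  is_derive (0:R) (1:R) (fun t : R => WSR G U D W sigma2 omega (th + t%:C *: v))
   (\sum_(k < K) omega k *
      (2 * complex.Re (\tr (invmx (Hk (D k) (U k) G th *m Wbar W *m ctrmx (Hk (D k) (U k) G th)
              + (sigma2%:C)%:M) *m Hk (D k) (U k) G th *m Wbar W *m ctrmx (U k *m diagv v *m G)))
     - 2 * complex.Re (\tr (invmx (Hk (D k) (U k) G th *m Wbark W k *m ctrmx (Hk (D k) (U k) G th)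
              + (sigma2%:C)%:M) *m Hk (D k) (U k) G th *m Wbark W k *m ctrmx (U k *m diagv v *m G))))).
Proof.
move=> sp.
have -> : (fun t : R => WSR G U D W sigma2 omega (th + t%:C *: v)) =
  \sum_(k < K) (fun t : R => omega k *
     (logdet ((sigma2%:C)%:M + (Hk (D k) (U k) G th + t%:C *: (U k *m diagv v *m G)) *m Wbar W
              *m ctrmx (Hk (D k) (U k) G th + t%:C *: (U k *m diagv v *m G)))
    - logdet ((sigma2%:C)%:M + (Hk (D k) (U k) G th + t%:C *: (U k *m diagv v *m G)) *m Wbark W k
              *m ctrmx (Hk (D k) (U k) G th + t%:C *: (U k *m diagv v *m G))))).
  rewrite fct_sumE; apply/funext => t; rewrite /WSR; apply: eq_bigr => k _.
  by rewrite HkDZ.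
apply: is_derive_sum => k.
have h1 := is_derive_logdet (Hk (D k) (U k) G th) (U k *m diagv v *m G) sp (Wbar_herm W) (Wbar_psd W).
have h2 := is_derive_logdet (Hk (D k) (U k) G th) (U k *m diagv v *m G) sp (Wbark_herm W k) (Wbark_psd W k).
have h3 := is_deriveZ (omega k) (is_deriveB h1 h2).
exact: h3.
Qed.

End Final.

Section Final2.
Variable R : realType.
Variables (K Nr Ns Nt Nd : nat) (G : 'M[R[i]]_(Ns, Nt)) (U : 'I_K -> 'M[R[i]]_(Nr, Ns))
  (D : 'I_K -> 'M[R[i]]_(Nr, Nt)) (W : 'I_K -> 'M[R[i]]_(Nt, Nd))
  (sigma2 : R) (omega : 'I_K -> R) (th : 'cV[R[i]]_Ns) (i : 'I_Ns).
Hypothesis hs : 0 < sigma2.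

Definition zval (v : 'cV[R[i]]_Ns) := (\sum_(k < K) omega k *
      (2 * complex.Re (\tr (invmx (Hk (D k) (U k) G th *m Wbar W *m ctrmx (Hk (D k) (U k) G th)
              + (sigma2%:C)%:M) *m Hk (D k) (U k) G th *m Wbar W *m ctrmx (U k *m diagv v *m G)))
     - 2 * complex.Re (\tr (invmx (Hk (D k) (U k) G th *m Wbark W k *m ctrmx (Hk (D k) (U k) G th)
              + (sigma2%:C)%:M) *m Hk (D k) (U k) G th *m Wbark W k *m ctrmx (U k *m diagv v *m G))))).

Lemma dRe_isd : is_derive (0:R) (1:R) (dRe (WSR G U D W sigma2 omega) th i) (zval (ecv i)).
Proof. exact: (WSR_dir G U D W omega th (ecv i) hs). Qed.

Lemma dIm_isd : is_derive (0:R) (1:R) (dIm (WSR G U D W sigma2 omega) th i) (zval ('i%C *: ecv i)).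
Proof.
have -> : dIm (WSR G U D W sigma2 omega) th i =
   (fun t : R => WSR G U D W sigma2 omega (th + t%:C *: ('i%C *: ecv i))).
  by apply/funext => t; rewrite /dIm scalerA.
exact: (WSR_dir G U D W omega th ('i%C *: ecv i) hs).
Qed.

End Final2.

Lemma Re_cJi (R : rcfType) (y : R[i]) : complex.Re (conjc 'i%C * y) = complex.Im y.
Proof. by case: y => a b /=; lra. Qed.

Lemma derive1_of (R : realType) (f : R -> R) (d : R) :
  is_derive (0:R) (1:R) f d -> derive1 f 0 = d :> R.
Proof. by move=> h; rewrite derive1E derive_val. Qed.

Lemma final_shape (R : realType) (x y A B : R) (z : R[i]) : x = A -> y = B ->
  ((2^-1)%:C)%C * ((A%:C)%C + 'i%C * (B%:C)%C) = z ->
  ((2^-1)%:C)%C * ((x%:C)%C + 'i%C * (y%:C)%C) = z.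
Proof. by move=> -> ->. Qed.


Section Alg.
Variable R : realType.
Variables (K Nr Ns Nt Nd : nat) (G : 'M[R[i]]_(Ns, Nt)) (U : 'I_K -> 'M[R[i]]_(Nr, Ns))
  (D : 'I_K -> 'M[R[i]]_(Nr, Nt)) (W : 'I_K -> 'M[R[i]]_(Nt, Nd))
  (sigma2 : R) (omega : 'I_K -> R) (th : 'cV[R[i]]_Ns) (i : 'I_Ns).

Lemma per_term (w : R) (y y' : R[i]) :
  ((2^-1)%:C)%C * (((w * (2 * complex.Re y - 2 * complex.Re y'))%:C)%C
     + 'i%C * ((w * (2 * complex.Im y - 2 * complex.Im y'))%:C)%C)
  = (w%:C)%C * (y - y').
Proof.
rewrite [in RHS](complexE y) [in RHS](complexE y').
move: (complex.Re y) (complex.Im y) (complex.Re y') (complex.Im y') => a b c d.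
rewrite !(rmorphM, rmorphB) /= fmorphV rmorph_nat.
have h2 : (2 : R[i]) != 0 by rewrite pnatr_eq0.
by field.
Qed.

Lemma vecd_entry n (a : R[i]) (X Y : 'M[R[i]]_n) j :
  (a *: (vecd X - vecd Y)) j 0 = a * (X j j - Y j j).
Proof. by rewrite !mxE. Qed.

Lemma sum_alg (w : 'I_K -> R) (y y' : 'I_K -> R[i]) :
  ((2^-1)%:C)%C * (((\sum_k w k * (2 * complex.Re (y k) - 2 * complex.Re (y' k)))%:C)%C
     + 'i%C * ((\sum_k w k * (2 * complex.Im (y k) - 2 * complex.Im (y' k)))%:C)%C)
  = \sum_k ((w k)%:C)%C * (y k - y' k).
Proof.
rewrite !rmorph_sum mulr_sumr -big_split mulr_sumr /=.
by apply: eq_bigr => k _; rewrite per_term.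
Qed.

Lemma final_alg :
  ((2^-1)%:C)%C * (((zval G U D W sigma2 omega th (ecv i))%:C)%C
     + 'i%C * ((zval G U D W sigma2 omega th ('i%C *: ecv i))%:C)%C)
  = (\sum_(k < K) ((omega k)%:C)%C *:
      (vecd (ctrmx (U k)
              *m invmx (Hk (D k) (U k) G th *m Wbar W *m ctrmx (Hk (D k) (U k) G th)
                        + (sigma2%:C)%C%:M)
              *m Hk (D k) (U k) G th *m Wbar W *m ctrmx G)
     - vecd (ctrmx (U k)
              *m invmx (Hk (D k) (U k) G th *m Wbark W k *m ctrmx (Hk (D k) (U k) G th)
                        + (sigma2%:C)%C%:M)
              *m Hk (D k) (U k) G th *m Wbark W k *m ctrmx G))) i 0.
Proof.
pose Y k := (ctrmx (U k)
              *m invmx (Hk (D k) (U k) G th *m Wbar W *m ctrmx (Hk (D k) (U k) G th)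
                        + (sigma2%:C)%C%:M)
              *m Hk (D k) (U k) G th *m Wbar W *m ctrmx G) i i.
pose Y' k := (ctrmx (U k)
              *m invmx (Hk (D k) (U k) G th *m Wbark W k *m ctrmx (Hk (D k) (U k) G th)
                        + (sigma2%:C)%C%:M)
              *m Hk (D k) (U k) G th *m Wbark W k *m ctrmx G) i i.
have E1 : zval G U D W sigma2 omega th (ecv i) =
   \sum_k omega k * (2 * complex.Re (Y k) - 2 * complex.Re (Y' k)).
  rewrite /zval; apply: eq_bigr => k _.
  rewrite z_e z_e.
  by [].
have E2 : zval G U D W sigma2 omega th ('i%C *: ecv i) =
   \sum_k omega k * (2 * complex.Im (Y k) - 2 * complex.Im (Y' k)).
  rewrite /zval; apply: eq_bigr => k _.
  rewrite z_ie z_ie !Re_cJi.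
  by [].
rewrite E1 E2 sum_alg summxE; apply: eq_bigr => k _.
by rewrite vecd_entry.
Qed.

End Alg.

Unset Implicit Arguments. Set Strict Implicit.
Local Close Scope complex_scope.
Local Open Scope ring_scope.

Theorem theorem3 (R : realType) (K Nr Ns Nt Nd : nat)
  (G : 'M[R[i]]_(Ns, Nt)) (U : 'I_K -> 'M[R[i]]_(Nr, Ns))
  (D : 'I_K -> 'M[R[i]]_(Nr, Nt)) (W : 'I_K -> 'M[R[i]]_(Nt, Nd))
  (sigma2 : R) (omega : 'I_K -> R) (hsigma : 0 < sigma2)
  (th : 'cV[R[i]]_Ns) (i : 'I_Ns) :
  let f := WSR G U D W sigma2 omega in
  let gradR : 'cV[R[i]]_Ns :=
    \sum_(k < K) ((omega k)%:C)%C *: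
      (vecd (ctrmx (U k)
              *m invmx (Hk (D k) (U k) G th *m Wbar W *m ctrmx (Hk (D k) (U k) G th)
                        + (sigma2%:C)%C%:M)
              *m Hk (D k) (U k) G th *m Wbar W *m ctrmx G)
     - vecd (ctrmx (U k)
              *m invmx (Hk (D k) (U k) G th *m Wbark W k *m ctrmx (Hk (D k) (U k) G th)
                        + (sigma2%:C)%C%:M)
              *m Hk (D k) (U k) G th *m Wbark W k *m ctrmx G)) in
  [/\ derivable (dRe f th i) 0 1, derivable (dIm f th i) 0 1
    & (((2 : R)^-1)%:C)%C * (((derive1 (dRe f th i) 0)%:C)%C + 'i%C * ((derive1 (dIm f th i) 0)%:C)%C)
      = gradR i 0].

Proof.
move=> f gradR.
have d1 := dRe_isd G U D W omega th i hsigma.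
have d2 := dIm_isd G U D W omega th i hsigma.
rewrite /f; split; [by case: d1 | by case: d2 | ].
apply: (final_shape (derive1_of d1) (derive1_of d2)).
exact: final_alg.
Qed.
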